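(* For every environment $\omega$, $n=l+m$, $x=-l+m$ with $l,m\ge0$, $$P^{\omega}_n(X_n=x)=P^{\mathbf 0}_n(X_n=x)+\tfrac12\{p^{(H)}_n(l,m)^2-q^{(H)}_n(l,m)^2\}\sin(\omega_0),$$ where $P^{\mathbf 0}_n$ denotes the quenched law for the environment $\omega\equiv0$.
   Context: $U_x=\frac{1}{\sqrt2}\begin{pmatrix} e^{i\omega_x} & 1\\ 1 & -e^{-i\omega_x}\end{pmatrix}=\begin{pmatrix} a_x & b_x\\ c_x & d_x\end{pmatrix}$ ($\omega_x\in\mathbb R$), $P_x=\begin{pmatrix} a_x & b_x\\ 0&0\end{pmatrix}$, $Q_x=\begin{pmatrix} 0&0\\ c_x & d_x\end{pmatrix}$. $\Xi_0(0,0)=I$, $\Xi_n(l,m)=0$ if $l<0$ or $m<0$, and $\Xi_{n+1}(l,m)=P_{x+1}\Xi_n(l-1,m)+Q_{x-1}\Xi_n(l,m-1)$ for $l,m\ge0$, $l+m=n+1$, $x=-l+m$. With $\varphi_*={}^T[1/\sqrt2,i/\sqrt2]$, $P^{\omega}_n(X_n=x)=\|\Xi_n(l,m)\varphi_*\|^2$. Here, for $\min\{l,m\}\ge1$, $p^{(H)}_n(l,m)=(1/\sqrt2)^{n-1}\sum_{\gamma=1}^{(l-1)\wedge m}(-1)^{m-\gamma}\binom{l-1}{\gamma}\binom{m-1}{\gamma-1}$ and $q^{(H)}_n(l,m)=(1/\sqrt2)^{n-1}\sum_{\gamma=1}^{l\wedge(m-1)}(-1)^{m-\gamma-1}\binom{l-1}{\gamma-1}\binom{m-1}{\gamma}$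 (empty sums are $0$); $p^{(H)}_n(0,n)=0$, $q^{(H)}_n(0,n)=(-1/\sqrt2)^{n-1}$, $p^{(H)}_n(n,0)=(1/\sqrt2)^{n-1}$, $q^{(H)}_n(n,0)=0$ for $n\ge1$, and $p^{(H)}_0(0,0)=q^{(H)}_0(0,0)=0$. *)

(* Defs.v *)
From Stdlib Require Import Reals ZArith List.
Open Scope R_scope.

(* Complex numbers as (real part, imaginary part). *)
Definition C : Type := (R * R)%type.
Definition Cadd (z w : C) : C := (fst z + fst w, snd z + snd w).
Definition Cmul (z w : C) : C :=
  (fst z * fst w - snd z * snd w, fst z * snd w + snd z * fst w).
Definition Cr (r : R) : C := (r, 0).
Definition C0 : C := (0, 0).
Definition C1 : C := (1, 0).
Definition Cexpi (t : R) : C := (cos t, sin t).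
Definition Cnorm2 (z : C) : R := fst z * fst z + snd z * snd z.

Record M2 := mkM2 { m11 : C; m12 : C; m21 : C; m22 : C }.
Definition V2 : Type := (C * C)%type.

Definition Madd (A B : M2) : M2 :=
  mkM2 (Cadd (m11 A) (m11 B)) (Cadd (m12 A) (m12 B))
       (Cadd (m21 A) (m21 B)) (Cadd (m22 A) (m22 B)).
Definition Mmul (A B : M2) : M2 :=
  mkM2 (Cadd (Cmul (m11 A) (m11 B)) (Cmul (m12 A) (m21 B)))
       (Cadd (Cmul (m11 A) (m12 B)) (Cmul (m12 A) (m22 B)))
       (Cadd (Cmul (m21 A) (m11 B)) (Cmul (m22 A) (m21 B)))
       (Cadd (Cmul (m21 A) (m12 B)) (Cmul (m22 A) (m22 B))).
Definition Mzero : M2 := mkM2 C0 C0 C0 C0.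
Definition Mid : M2 := mkM2 C1 C0 C0 C1.
Definition Mapply (A : M2) (v : V2) : V2 :=
  (Cadd (Cmul (m11 A) (fst v)) (Cmul (m12 A) (snd v)),
   Cadd (Cmul (m21 A) (fst v)) (Cmul (m22 A) (snd v))).
Definition Vnorm2 (v : V2) : R := Cnorm2 (fst v) + Cnorm2 (snd v).

Definition env : Type := Z -> R.

Definition ax (w : env) (x : Z) : C := Cmul (Cr (/ sqrt 2)) (Cexpi (w x)).
Definition bx (w : env) (x : Z) : C := Cr (/ sqrt 2).
Definition cx (w : env) (x : Z) : C := Cr (/ sqrt 2).
Definition dx (w : env) (x : Z) : C :=
  Cmul (Cr (- / sqrt 2)) (Cexpi (- w x)).
Definition Ux (w : env) (x : Z) : M2 := mkM2 (ax w x) (bx w x) (cx w x) (dx w x).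
Definition Px (w : env) (x : Z) : M2 := mkM2 (ax w x) (bx w x) C0 C0.
Definition Qx (w : env) (x : Z) : M2 := mkM2 C0 C0 (cx w x) (dx w x).

(* Xi_n(l,m), used with l + m = n; x = -l + m. *)
Fixpoint XiAux (w : env) (n l m : nat) : M2 :=
  match n with
  | O => match l, m with O, O => Mid | _, _ => Mzero end
  | S n' =>
      let x := (- Z.of_nat l + Z.of_nat m)%Z in
      Madd
        (match l with O => Mzero | S l' => Mmul (Px w (x + 1)%Z) (XiAux w n' l' m) end)
        (match m with O => Mzero | S m' => Mmul (Qx w (x - 1)%Z) (XiAux w n' l m') end)
  end.
Definition Xi (w : env) (l m : nat) : M2 := XiAux w (l + m) l m.

Definition phistar : V2 := ((/ sqrt 2, 0), (0, / sqrt 2)).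

(* P^w_n(X_n = x) with n = l + m, x = -l + m *)
Definition prob (w : env) (l m : nat) : R := Vnorm2 (Mapply (Xi w l m) phistar).

Definition env0 : env := fun _ => 0.

Definition sum1 (k : nat) (f : nat -> R) : R :=
  fold_right Rplus 0 (map f (seq 1 k)).

Definition pH (l m : nat) : R :=
  match l, m with
  | O, _ => 0
  | S _, O => (/ sqrt 2) ^ (l + m - 1)
  | S _, S _ =>
      (/ sqrt 2) ^ (l + m - 1) *
      sum1 (Nat.min (l - 1) m)
        (fun g => (-1) ^ (m - g) * Binomial.C (l - 1) g * Binomial.C (m - 1) (g - 1))
  end.
Definition qH (l m : nat) : R :=
  match l, m with
  | O, O => 0
  | O, S _ => (- / sqrt 2) ^ (l + m - 1)
  | S _, O => 0
  | S _, S _ =>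
      (/ sqrt 2) ^ (l + m - 1) *
      sum1 (Nat.min l (m - 1))
        (fun g => (-1) ^ (m - g - 1) * Binomial.C (l - 1) (g - 1) * Binomial.C (m - 1) g)
  end.

(* Main.v *)
Require Import Defs.
From Stdlib Require Import Reals ZArith List Lia Lra.
Open Scope R_scope.

Fixpoint bin (n k : nat) : R :=
  match n, k with
  | O, O => 1
  | O, S _ => 0
  | S _, O => 1
  | S n', S k' => bin n' k' + bin n' (S k')
  end.

Lemma bin_0 n : bin n 0 = 1. Proof. destruct n; reflexivity. Qed.
Lemma bin_big n k : (n < k)%nat -> bin n k = 0.
Proof.
  revert k; induction n; intros k Hk; destruct k; try lia; simpl; auto.
  rewrite !IHn by lia. ring.
Qed.
Lemma bin_nn n : bin n n = 1.
Proof. induction n; simpl; auto. rewrite IHn, bin_big by lia. ring. Qed.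

Lemma Cbin n k : (k <= n)%nat -> Binomial.C n k = bin n k.
Proof.
  revert k; induction n; intros k Hk.
  - destruct k; [|lia]. unfold Binomial.C. simpl (0 - 0)%nat. simpl fact. simpl bin.
    change (INR 1) with 1. field.
  - destruct k.
    + rewrite bin_0. unfold Binomial.C. rewrite Nat.sub_0_r. simpl (fact 0).
      change (INR 1) with 1. rewrite Rmult_1_l. apply Rinv_r. apply INR_fact_neq_0.
    + destruct (Nat.eq_dec k n) as [->|Hne].
      * rewrite bin_nn. unfold Binomial.C. rewrite Nat.sub_diag. simpl (fact 0).
        change (INR 1) with 1. rewrite Rmult_1_r. unfold Rdiv. apply Rinv_r. apply INR_fact_neq_0.
      * rewrite <- Binomial.pascal by lia. simpl. rewrite !IHn by lia. ring.
Qed.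

Fixpoint sN (f : nat -> R) (N : nat) : R :=
  match N with O => 0 | S N' => sN f N' + f N' end.

Lemma sN_ext f g N : (forall k, (k < N)%nat -> f k = g k) -> sN f N = sN g N.
Proof. induction N; intros H; simpl; auto. rewrite IHN, H by auto. reflexivity. Qed.
Lemma sN_add f g N : sN (fun k => f k + g k) N = sN f N + sN g N.
Proof. induction N; simpl; [ring|]. rewrite IHN. ring. Qed.
Lemma sN_opp f N : sN (fun k => - f k) N = - sN f N.
Proof. induction N; simpl; [ring|]. rewrite IHN. ring. Qed.
Lemma sN_zero f N : (forall k, f k = 0) -> sN f N = 0.
Proof. induction N; simpl; intros; auto. rewrite IHN, H; auto; ring. Qed.
Lemma sN_shift f N : sN f (S N) = f O + sN (fun k => f (S k)) N.
Proof. induction N; simpl in *; [ring|]. rewrite IHN. ring. Qed.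
Lemma sN_extend f m N : (forall k, (m <= k)%nat -> f k = 0) -> (m <= N)%nat ->
  sN f N = sN f m.
Proof.
  intros Hf HN. induction HN; auto. simpl. rewrite IHHN, Hf by lia. ring.
Qed.
Lemma sN_up f N : f N = 0 -> sN f (S N) = sN f N.
Proof. intros H; simpl; rewrite H; ring. Qed.

Lemma sum1_sN k f : sum1 k f = sN (fun t => f (S t)) k.
Proof.
  unfold sum1. assert (G : forall a, fold_right Rplus 0 (map f (seq a k)) =
    sN (fun t => f (a + t)%nat) k).
  { induction k; intros a; [reflexivity|]. cbn [seq map fold_right].
    rewrite sN_shift, IHk. rewrite Nat.add_0_r. f_equal.
    apply sN_ext. intros; f_equal; lia. }
  rewrite G. apply sN_ext; intros; f_equal.
Qed.

Lemma sign_sub a b : (a <= b)%nat -> (-1) ^ (b - a) = (-1) ^ (b + a).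
Proof.
  intros H. replace (b + a)%nat with ((b - a) + 2 * a)%nat by lia.
  rewrite pow_add, pow_mult. replace ((-1)^2) with 1 by ring. rewrite pow1. ring.
Qed.

Definition Pp i j := sN (fun k => (-1) ^ (j + k) * bin i (S k) * bin j k) (S (i + j)).
Definition Qp i j := sN (fun k => (-1) ^ (j + k + 1) * bin i k * bin j (S k)) (S (i + j)).
Definition Rp i j := sN (fun k => (-1) ^ (j + k) * bin i k * bin j k) (S (i + j)).

Lemma Pp0 j : Pp 0 j = 0.
Proof. unfold Pp. apply sN_zero. intros k. simpl. ring. Qed.
Lemma Qp0 i : Qp i 0 = 0.
Proof. unfold Qp. apply sN_zero. intros k. simpl bin. ring. Qed.
Lemma Rpi0 i : Rp i 0 = 1.
Proof.
  unfold Rp. rewrite sN_shift, sN_zero. simpl. rewrite bin_0. ring.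
  intros k. simpl bin. ring.
Qed.
Lemma Rp0j j : Rp 0 j = (-1) ^ j.
Proof.
  unfold Rp. rewrite sN_shift, sN_zero. rewrite !bin_0, Nat.add_0_r. ring.
  intros k. simpl bin. ring.
Qed.

Lemma I1 i j : Pp (S i) j = Pp i j + Rp i j.
Proof.
  unfold Pp, Rp. simpl (S i + j)%nat.
  rewrite <- (sN_up (fun k => (-1) ^ (j + k) * bin i (S k) * bin j k)) by
    (rewrite (bin_big i) by lia; ring).
  rewrite <- (sN_up (fun k => (-1) ^ (j + k) * bin i k * bin j k) (S (i+j))) by
    (rewrite (bin_big i) by lia; ring).
  rewrite <- sN_add. apply sN_ext. intros k _. simpl bin. ring.
Qed.

Lemma I4 i j : Qp i (S j) = Rp i j - Qp i j.
Proof.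
  unfold Qp, Rp. replace (i + S j)%nat with (S (i + j)) by lia.
  rewrite <- (sN_up (fun k => (-1) ^ (j + k) * bin i k * bin j k) (S (i+j))) by
    (rewrite (bin_big j) by lia; ring).
  rewrite <- (sN_up (fun k => (-1) ^ (j + k + 1) * bin i k * bin j (S k)) (S (i+j))) by
    (rewrite (bin_big j) by lia; ring).
  unfold Rminus. rewrite <- sN_opp, <- sN_add. apply sN_ext. intros k _.
  replace (S j + k + 1)%nat with (S (S (j + k))) by lia.
  replace (j + k + 1)%nat with (S (j + k)) by lia.
  simpl bin. simpl pow. ring.
Qed.

Lemma I2 i j : Rp i (S j) = Pp i j - Rp i j.
Proof.
  unfold Rp, Pp. replace (i + S j)%nat with (S (i + j)) by lia.
  rewrite sN_shift. rewrite (sN_shift (fun k => (-1)^(j+k) * bin i k * bin j k) (i + j)).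
  rewrite <- (sN_up (fun k => (-1) ^ (j + S k) * bin i (S k) * bin j (S k)) (i+j)) by
    (rewrite (bin_big i) by lia; ring).
  rewrite !bin_0.
  assert (E : sN (fun k => (-1) ^ (S j + S k) * bin i (S k) * bin (S j) (S k)) (S (i + j))
   = sN (fun k => (-1) ^ (j + k) * bin i (S k) * bin j k) (S (i + j))
     - sN (fun k => (-1) ^ (j + S k) * bin i (S k) * bin j (S k)) (S (i + j))).
  { unfold Rminus. rewrite <- sN_opp, <- sN_add. apply sN_ext. intros k _.
    replace (S j + S k)%nat with (S (S (j + k))) by lia.
    replace (j + S k)%nat with (S (j + k)) by lia. simpl bin. simpl pow. ring. }
  rewrite E. rewrite !Nat.add_0_r. simpl pow. ring.
Qed.

Lemma I3 i j : Rp (S i) j = Rp i j + Qp i j.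
Proof.
  unfold Rp, Qp. simpl (S i + j)%nat.
  rewrite sN_shift. rewrite (sN_shift (fun k => (-1)^(j+k) * bin i k * bin j k) (i + j)).
  rewrite <- (sN_up (fun k => (-1) ^ (j + S k) * bin i (S k) * bin j (S k)) (i+j)) by
    (rewrite (bin_big i) by lia; ring).
  rewrite !bin_0.
  assert (E : sN (fun k => (-1) ^ (j + S k) * bin (S i) (S k) * bin j (S k)) (S (i + j))
   = sN (fun k => (-1) ^ (j + k + 1) * bin i k * bin j (S k)) (S (i + j))
     + sN (fun k => (-1) ^ (j + S k) * bin i (S k) * bin j (S k)) (S (i + j))).
  { rewrite <- sN_add. apply sN_ext. intros k _.
    replace (j + k + 1)%nat with (j + S k)%nat by lia. simpl bin. ring. }
  rewrite E. rewrite !Nat.add_0_r. ring.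
Qed.

Lemma pH_SS i j : pH (S i) (S j) = (/ sqrt 2) ^ (S (i + j)) * Pp i j.
Proof.
  unfold pH. replace (S i + S j - 1)%nat with (S (i + j)) by lia. f_equal.
  rewrite sum1_sN. replace (S i - 1)%nat with i by lia.
  unfold Pp. rewrite (sN_extend _ (Nat.min i (S j)) (S (i+j))).
  - apply sN_ext. intros k Hk.
    replace (S j - S k)%nat with (j - k)%nat by lia. rewrite sign_sub by lia.
    replace (S k - 1)%nat with k by lia.
    replace (S j - 1)%nat with j by lia. rewrite !Cbin by lia. ring.
  - intros k Hk. destruct (Nat.le_gt_cases (S k) i).
    + rewrite (bin_big j) by lia. ring.
    + rewrite (bin_big i) by lia. ring.
  - lia.
Qed.

Lemma qH_SS i j : qH (S i) (S j) = (/ sqrt 2) ^ (S (i + j)) * Qp i j.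
Proof.
  unfold qH. replace (S i + S j - 1)%nat with (S (i + j)) by lia. f_equal.
  rewrite sum1_sN. replace (S j - 1)%nat with j by lia.
  unfold Qp. rewrite (sN_extend _ (Nat.min (S i) j) (S (i+j))).
  - apply sN_ext. intros k Hk.
    replace (S j - S k - 1)%nat with (j - S k)%nat by lia. rewrite sign_sub by lia.
    replace (S k - 1)%nat with k by lia.
    replace (j + S k)%nat with (j + k + 1)%nat by lia.
    replace (S i - 1)%nat with i by lia. rewrite !Cbin by lia. ring.
  - intros k Hk. destruct (Nat.le_gt_cases k i).
    + rewrite (bin_big j (S k)) by lia. ring.
    + rewrite (bin_big i) by lia. ring.
  - lia.
Qed.

Lemma pH_S0 i : pH (S i) 0 = (/ sqrt 2) ^ i.
Proof. unfold pH. f_equal. lia. Qed.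
Lemma pH_0 m : pH 0 m = 0.
Proof. reflexivity. Qed.
Lemma qH_S0 i : qH (S i) 0 = 0.
Proof. reflexivity. Qed.
Lemma qH_0S j : qH 0 (S j) = (- / sqrt 2) ^ j.
Proof. unfold qH. f_equal. lia. Qed.

Definition s := / sqrt 2.
Lemma ss : s * s = / 2.
Proof. unfold s. rewrite <- Rinv_mult. rewrite sqrt_sqrt; lra. Qed.

Record Q4 := mk4 { q1 : R; q2 : R; q3 : R; q4 : R }.
Definition z4 := mk4 0 0 0 0.

Fixpoint X0 (n l m : nat) : Q4 :=
  match n with
  | O => match l, m with O, O => mk4 1 0 0 1 | _, _ => z4 end
  | S n' =>
    let A := match l with O => z4 | S l' => let X := X0 n' l' m in
               mk4 (s * (q1 X + q3 X)) (s * (q2 X + q4 X)) 0 0 end in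
    let B := match m with O => z4 | S m' => let X := X0 n' l m' in
               mk4 0 0 (s * (q1 X - q3 X)) (s * (q2 X - q4 X)) end in
    mk4 (q1 A + q1 B) (q2 A + q2 B) (q3 A + q3 B) (q4 A + q4 B)
  end.

Lemma X0_S n l m : X0 (S n) l m =
    let A := match l with O => z4 | S l' => let X := X0 n l' m in
               mk4 (s * (q1 X + q3 X)) (s * (q2 X + q4 X)) 0 0 end in
    let B := match m with O => z4 | S m' => let X := X0 n l m' in
               mk4 0 0 (s * (q1 X - q3 X)) (s * (q2 X - q4 X)) end in
    mk4 (q1 A + q1 B) (q2 A + q2 B) (q3 A + q3 B) (q4 A + q4 B).
Proof. reflexivity. Qed.

Definition rH (l m : nat) : R :=
  match l, m with S i, S j => s ^ (S (i + j)) * Rp i j | _, _ => 0 end.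

Definition Kprop (X : Q4) (l m : nat) : Prop :=
  s * (q1 X + q2 X) = pH l m /\ s * (q3 X - q4 X) = qH l m /\
  s * (q1 X - q2 X) = rH l m /\ s * (q3 X + q4 X) = rH l m.

Lemma qH_l0 l : qH l 0 = 0. Proof. destruct l; reflexivity. Qed.
Lemma rH_l0 l : rH l 0 = 0. Proof. destruct l; reflexivity. Qed.
Lemma rH_0m m : rH 0 m = 0. Proof. reflexivity. Qed.

Lemma neg_pow j : (- s) ^ j = (-1) ^ j * s ^ j.
Proof. replace (- s) with ((-1) * s) by ring. apply Rpow_mult_distr. Qed.

Lemma Kthm n : forall l m, (l + m = S n)%nat -> Kprop (X0 (S n) l m) l m.
Proof.
  induction n; intros l m Hlm.
  - destruct l as [|[|l]]; destruct m as [|[|m]]; try lia; cbn [X0 q1 q2 q3 q4 z4];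
    unfold Kprop; cbn [q1 q2 q3 q4]; rewrite ?qH_l0, ?rH_l0, ?rH_0m.
    + rewrite qH_0S, pH_0. repeat split; try ring.
      simpl. replace (s * (0 + s * (1 - 0) - (0 + s * (0 - 1)))) with (2 * (s * s)) by ring.
      rewrite ss. field.
    + rewrite pH_S0. repeat split; try ring.
      simpl. replace (s * (s * (1 + 0) + 0 + (s * (0 + 1) + 0))) with (2 * (s * s)) by ring.
      rewrite ss. field.
  -
    set (A := match l with O => z4 | S l' => X0 (S n) l' m end).
    set (B := match m with O => z4 | S m' => X0 (S n) l m' end).
    assert (E : X0 (S (S n)) l m =
      mk4 (s * (q1 A + q3 A)) (s * (q2 A + q4 A)) (s * (q1 B - q3 B)) (s * (q2 B - q4 B))).
    { rewrite X0_S. subst A B. destruct l, m; cbn [z4 q1 q2 q3 q4]; f_equal; ring. }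
    rewrite E. unfold Kprop; cbn [q1 q2 q3 q4].
    replace (s * (s * (q1 A + q3 A) + s * (q2 A + q4 A)))
      with (s * (s * (q1 A + q2 A) + s * (q3 A + q4 A))) by ring.
    replace (s * (s * (q1 B - q3 B) - s * (q2 B - q4 B)))
      with (s * (s * (q1 B - q2 B) - s * (q3 B - q4 B))) by ring.
    replace (s * (s * (q1 A + q3 A) - s * (q2 A + q4 A)))
      with (s * (s * (q1 A - q2 A) + s * (q3 A - q4 A))) by ring.
    replace (s * (s * (q1 B - q3 B) + s * (q2 B - q4 B)))
      with (s * (s * (q1 B + q2 B) - s * (q3 B + q4 B))) by ring.
    assert (HA : match l with O => A = z4 | S i => Kprop A i m end).
    { destruct l; subst A; [reflexivity|]. apply IHn. lia. }
    assert (HB : match m with O => B = z4 | S j => Kprop B l j end).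
    { destruct m; subst B; [reflexivity|]. apply IHn. lia. }
    clearbody A B.
    repeat split.
    + destruct l as [|i]. { subst A. cbn. ring. }
      destruct HA as [H1 [H2 [H3 H4]]]. rewrite H1, H4.
      destruct m as [|j].
      * destruct i as [|i]; [lia|]. rewrite rH_l0, !pH_S0. unfold s; simpl; ring.
      * destruct i as [|i].
        -- rewrite pH_0, rH_0m, pH_SS, Pp0. unfold s; ring.
        -- unfold rH. rewrite !pH_SS, I1. replace (S (S i + j)) with (S (S (i + j))) by lia.
           unfold s; simpl; ring.
    + destruct m as [|j]. { subst B. cbn. rewrite ?qH_l0. ring. }
      destruct HB as [H1 [H2 [H3 H4]]]. rewrite H3, H2.
      destruct l as [|i].
      * destruct j as [|j]; [lia|]. rewrite rH_0m, !qH_0S. unfold s; simpl; ring.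
      * destruct j as [|j].
        -- rewrite qH_S0, rH_l0, qH_SS, Qp0. ring.
        -- unfold rH. rewrite !qH_SS, I4. replace (i + S j)%nat with (S (i + j)) by lia.
           unfold s; simpl; ring.
    + destruct l as [|i]. { subst A. cbn. rewrite ?rH_0m. ring. }
      destruct HA as [H1 [H2 [H3 H4]]]. rewrite H3, H2.
      destruct m as [|j].
      * rewrite !rH_l0, qH_l0. ring.
      * destruct i as [|i].
        -- rewrite rH_0m, qH_0S. unfold rH. rewrite Rp0j, neg_pow. unfold s; simpl; ring.
        -- unfold rH. rewrite !qH_SS, I3. replace (S (S i + j)) with (S (S (i + j))) by lia.
           unfold s; simpl; ring.
    + destruct m as [|j]. { subst B. cbn. rewrite ?rH_l0. ring. }
      destruct HB as [H1 [H2 [H3 H4]]]. rewrite H1, H4.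
      destruct l as [|i].
      * rewrite pH_0, !rH_0m. ring.
      * destruct j as [|j].
        -- rewrite pH_S0, rH_l0. unfold rH. rewrite Rpi0, Nat.add_0_r. unfold s; simpl; ring.
        -- unfold rH. rewrite !pH_SS, I2. replace (i + S j)%nat with (S (i + j)) by lia.
           unfold s; simpl; ring.
Qed.

Lemma X0_key l m : let X := X0 (l + m) l m in
  q1 X * q2 X + q3 X * q4 X = / 2 * (pH l m ^ 2 - qH l m ^ 2).
Proof.
  intros X. destruct (l + m)%nat eqn:E.
  - assert (l = O) by lia; assert (m = O) by lia; subst. subst X. cbn. unfold pH, qH. ring.
  - destruct (Kthm n l m E) as [H1 [H2 [H3 H4]]]. fold X in H1, H2, H3, H4.
    assert (G : q1 X * q2 X + q3 X * q4 X = (s*s) * ((s*(q1 X + q2 X))^2 - (s*(q1 X - q2 X))^2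
        + (s*(q3 X + q4 X))^2 - (s*(q3 X - q4 X))^2)).
    { replace ((s*s) * ((s*(q1 X + q2 X))^2 - (s*(q1 X - q2 X))^2
        + (s*(q3 X + q4 X))^2 - (s*(q3 X - q4 X))^2)) with
        ((s*s)*(s*s)*4 * (q1 X * q2 X + q3 X * q4 X)) by ring.
      rewrite ss. field. }
    rewrite G, H1, H2, H3, H4, ss. ring.
Qed.

Lemma M2ext (A B : M2) :
  fst (m11 A) = fst (m11 B) -> snd (m11 A) = snd (m11 B) ->
  fst (m12 A) = fst (m12 B) -> snd (m12 A) = snd (m12 B) ->
  fst (m21 A) = fst (m21 B) -> snd (m21 A) = snd (m21 B) ->
  fst (m22 A) = fst (m22 B) -> snd (m22 A) = snd (m22 B) -> A = B.
Proof.
  destruct A as [[a1 a2] [b1 b2] [c1 c2] [d1 d2]], B as [[e1 e2] [f1 f2] [g1 g2] [h1 h2]].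
  simpl; intros; subst; reflexivity.
Qed.

Definition emb (X : Q4) : M2 := mkM2 (q1 X, 0) (q2 X, 0) (q3 X, 0) (q4 X, 0).

Lemma XiAux_S w n l m : XiAux w (S n) l m =
  let x := (- Z.of_nat l + Z.of_nat m)%Z in
      Madd
        (match l with O => Mzero | S l' => Mmul (Px w (x + 1)%Z) (XiAux w n l' m) end)
        (match m with O => Mzero | S m' => Mmul (Qx w (x - 1)%Z) (XiAux w n l m') end).
Proof. reflexivity. Qed.

Ltac cb := cbn [Madd Mmul Cadd Cmul fst snd m11 m12 m21 m22 Px Qx ax bx cx dx Cr Cexpi
               Defs.C0 Defs.C1 emb q1 q2 q3 q4 z4 Mzero Mid Mapply Vnorm2 Cnorm2 phistar].

Lemma Xi_env0 n : forall l m, XiAux env0 n l m = emb (X0 n l m).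
Proof.
  induction n; intros l m.
  - destruct l, m; reflexivity.
  - rewrite XiAux_S, X0_S. cbv zeta.
    destruct l, m; rewrite ?IHn; unfold env0;
    apply M2ext; cb; fold s; rewrite ?Ropp_0, ?cos_0, ?sin_0; ring.
Qed.

Fixpoint fpos (w : env) (n : nat) : R :=
  match n with O => 0 | S k => fpos w k + w (Z.of_nat (S k)) end.
Fixpoint fneg (w : env) (n : nat) : R :=
  match n with O => 0 | S k => fneg w k - w (- Z.of_nat k)%Z end.
Definition prim (w : env) (x : Z) : R :=
  if Z.leb 0 x then fpos w (Z.to_nat x) else fneg w (Z.to_nat (- x)).

Lemma prim_pos w n : prim w (Z.of_nat n) = fpos w n.
Proof. unfold prim. destruct (Z.leb_spec 0 (Z.of_nat n)); [|lia]. rewrite Nat2Z.id. auto. Qed.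
Lemma prim_neg w n : prim w (- Z.of_nat n) = fneg w n.
Proof.
  unfold prim. destruct n. { simpl. reflexivity. }
  destruct (Z.leb_spec 0 (- Z.of_nat (S n))); [lia|]. rewrite Z.opp_involutive, Nat2Z.id. auto.
Qed.

Lemma prim_step w x : prim w (x + 1) = prim w x + w (x + 1)%Z.
Proof.
  destruct (Z_le_dec 0 x).
  - replace x with (Z.of_nat (Z.to_nat x)) by lia. set (k := Z.to_nat x).
    replace (Z.of_nat k + 1)%Z with (Z.of_nat (S k)) by lia.
    rewrite !prim_pos. simpl fpos. reflexivity.
  - replace x with (- Z.of_nat (S (Z.to_nat (- x - 1))))%Z by lia. set (k := Z.to_nat (- x - 1)).
    replace (- Z.of_nat (S k) + 1)%Z with (- Z.of_nat k)%Z by lia.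
    rewrite !prim_neg. simpl fneg. ring.
Qed.

Definition gg (w : env) (x : Z) : R := - prim w x - w 0%Z.
Lemma gg_step w x : gg w x = gg w (x + 1) + w (x + 1)%Z.
Proof. unfold gg. rewrite prim_step. ring. Qed.
Lemma gg_m1 w : gg w (-1) = 0.
Proof.
  unfold gg. change (-1)%Z with (- Z.of_nat 1)%Z. rewrite prim_neg. simpl. ring.
Qed.
Lemma gg_0 w : gg w 0 = - w 0%Z.
Proof. unfold gg. change 0%Z with (Z.of_nat 0). rewrite prim_pos. simpl. ring. Qed.

Definition Dg (w : env) (x : Z) : M2 := mkM2 (Cexpi (gg w x)) Defs.C0 Defs.C0 (Cexpi (gg w (x - 1))).
Definition Eg (w : env) : M2 := mkM2 (Cexpi (w 0%Z)) Defs.C0 Defs.C0 Defs.C1.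

Lemma gauge w n : forall l m,
  XiAux w n l m = Mmul (Dg w (- Z.of_nat l + Z.of_nat m)) (Mmul (emb (X0 n l m)) (Eg w)).
Proof.
  induction n; intros l m.
  - destruct l, m; cbn [XiAux X0]; apply M2ext; unfold Dg, Eg; cb; try ring.
    all: try replace (- Z.of_nat 0 + Z.of_nat 0)%Z with 0%Z by lia.
    all: try replace (0 - 1)%Z with (-1)%Z by lia.
    all: rewrite ?gg_m1, ?gg_0, ?cos_0, ?sin_0, ?cos_neg, ?sin_neg.
    all: pose proof (sin2_cos2 (w 0%Z)); unfold Rsqr in *; nra.
  - rewrite XiAux_S, X0_S. cbv zeta.
    destruct l as [|l'], m as [|m'].
    + apply M2ext; unfold Dg, Eg; cb; ring.
    + rewrite IHn.
      replace (- Z.of_nat 0 + Z.of_nat m')%Z with ((- Z.of_nat 0 + Z.of_nat (S m')) - 1)%Z by lia.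
      set (y := (- Z.of_nat 0 + Z.of_nat (S m'))%Z).
      assert (Hg : gg w (y - 1) = gg w (y - 1 - 1) + - w (y - 1)%Z).
      { rewrite (gg_step w (y - 1 - 1)). replace (y - 1 - 1 + 1)%Z with (y - 1)%Z by lia. ring. }
      apply M2ext; unfold Dg, Eg; cb; try replace (y + 1 - 1)%Z with y by lia; rewrite ?Hg, ?cos_plus, ?sin_plus, ?cos_neg, ?sin_neg; unfold s; ring.
    + rewrite IHn.
      replace (- Z.of_nat l' + Z.of_nat 0)%Z with ((- Z.of_nat (S l') + Z.of_nat 0) + 1)%Z by lia.
      set (y := (- Z.of_nat (S l') + Z.of_nat 0)%Z).
      replace (y + 1 - 1)%Z with y by lia.
      assert (Hg : gg w y = gg w (y + 1) + w (y + 1)%Z) by apply gg_step.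
      apply M2ext; unfold Dg, Eg; cb; try replace (y + 1 - 1)%Z with y by lia; rewrite ?Hg, ?cos_plus, ?sin_plus, ?cos_neg, ?sin_neg; unfold s; ring.
    + rewrite !IHn.
      replace (- Z.of_nat l' + Z.of_nat (S m'))%Z with ((- Z.of_nat (S l') + Z.of_nat (S m')) + 1)%Z by lia.
      replace (- Z.of_nat (S l') + Z.of_nat m')%Z with ((- Z.of_nat (S l') + Z.of_nat (S m')) - 1)%Z by lia.
      set (y := (- Z.of_nat (S l') + Z.of_nat (S m'))%Z).
      replace (y + 1 - 1)%Z with y by lia.
      assert (Hg : gg w (y - 1) = gg w (y - 1 - 1) + - w (y - 1)%Z).
      { rewrite (gg_step w (y - 1 - 1)). replace (y - 1 - 1 + 1)%Z with (y - 1)%Z by lia. ring. }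
      assert (Hg' : gg w y = gg w (y + 1) + w (y + 1)%Z) by apply gg_step.
      apply M2ext; unfold Dg, Eg; cb; try replace (y + 1 - 1)%Z with y by lia; rewrite ?Hg, ?Hg', ?cos_plus, ?sin_plus, ?cos_neg, ?sin_neg; unfold s; ring.
Qed.

Lemma pyth t : cos t * cos t + sin t * sin t = 1.
Proof. pose proof (sin2_cos2 t). unfold Rsqr in H. lra. Qed.

Lemma Cext (z u : Defs.C) : fst z = fst u -> snd z = snd u -> z = u.
Proof. destruct z, u; simpl; intros; subst; reflexivity. Qed.

Lemma Cnorm2_mul z u : Cnorm2 (Cmul z u) = Cnorm2 z * Cnorm2 u.
Proof. destruct z, u; unfold Cnorm2, Cmul; simpl; ring. Qed.

Lemma Cnorm2_expi a : Cnorm2 (Cexpi a) = 1.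
Proof. unfold Cnorm2, Cexpi; simpl. rewrite pyth. reflexivity. Qed.

Lemma Mapply_diag z1 z2 B v :
  Mapply (Mmul (mkM2 z1 Defs.C0 Defs.C0 z2) B) v =
  (Cmul z1 (fst (Mapply B v)), Cmul z2 (snd (Mapply B v))).
Proof.
  destruct B as [[a1 a2] [b1 b2] [c1 c2] [d1 d2]], v as [[v1 v2] [u1 u2]], z1 as [x1 x2], z2 as [y1 y2].
  unfold Mapply, Mmul, Cadd, Cmul, Defs.C0. cbn [fst snd m11 m12 m21 m22].
  f_equal; apply Cext; simpl; ring.
Qed.

Lemma Mapply_embE X t :
  Mapply (Mmul (emb X) (mkM2 (Cexpi t) Defs.C0 Defs.C0 Defs.C1)) phistar =
  ((s * q1 X * cos t, s * q1 X * sin t + s * q2 X),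
   (s * q3 X * cos t, s * q3 X * sin t + s * q4 X)).
Proof.
  destruct X as [x1 x2 x3 x4].
  unfold Mapply, Mmul, emb, Cadd, Cmul, Cexpi, phistar, Defs.C0, Defs.C1.
  cbn [fst snd m11 m12 m21 m22 q1 q2 q3 q4]. fold s.
  f_equal; apply Cext; simpl; ring.
Qed.

Lemma normcalc (X : Q4) (a b t : R) :
  Vnorm2 (Mapply (Mmul (mkM2 (Cexpi a) Defs.C0 Defs.C0 (Cexpi b))
     (Mmul (emb X) (mkM2 (Cexpi t) Defs.C0 Defs.C0 Defs.C1))) phistar)
  = (q1 X ^ 2 + q2 X ^ 2 + q3 X ^ 2 + q4 X ^ 2) / 2 + (q1 X * q2 X + q3 X * q4 X) * sin t.
Proof.
  rewrite Mapply_diag, Mapply_embE. unfold Vnorm2. cbn [fst snd].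
  rewrite !Cnorm2_mul, !Cnorm2_expi. unfold Cnorm2. cbn [fst snd].
  transitivity ((s * s) *
       (q1 X ^ 2 * (cos t * cos t + sin t * sin t) + 2 * q1 X * q2 X * sin t + q2 X ^ 2)
     + (s * s) *
       (q3 X ^ 2 * (cos t * cos t + sin t * sin t) + 2 * q3 X * q4 X * sin t + q4 X ^ 2)).
  - ring.
  - rewrite !pyth, ss. field.
Qed.

Lemma prob_formula w l m :
  prob w l m = (q1 (X0 (l+m) l m) ^ 2 + q2 (X0 (l+m) l m) ^ 2 + q3 (X0 (l+m) l m) ^ 2
     + q4 (X0 (l+m) l m) ^ 2) / 2
   + (q1 (X0 (l+m) l m) * q2 (X0 (l+m) l m) + q3 (X0 (l+m) l m) * q4 (X0 (l+m) l m))
     * sin (w 0%Z).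
Proof.
  unfold prob, Xi. rewrite gauge. unfold Dg, Eg. apply normcalc.
Qed.

Theorem proposition2 (w : env) (l m : nat) :
  prob w l m = prob env0 l m + / 2 * (pH l m ^ 2 - qH l m ^ 2) * sin (w 0%Z).
Proof.
  rewrite !prob_formula. rewrite X0_key. unfold env0. rewrite sin_0. ring.
Qed.
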